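(* The Cauchy structure on ${\mathbf{R}_\mathbf{D}}$ restricts to a Cauchy structure on ${\mathbf{R}_\mathbf{E}}$: equipping ${\mathbf{R}_\mathbf{E}}$ with the restricted premetric, $\mathsf{rat}$ and $\lim$ of ${\mathbf{R}_\mathbf{D}}$ restrict to maps $\mathbf{Q}\to{\mathbf{R}_\mathbf{E}}$ and $\mathcal{C}_{{\mathbf{R}_\mathbf{E}}}\to{\mathbf{R}_\mathbf{E}}$, there is $\mathsf{eq}:\prod_{u,v:{\mathbf{R}_\mathbf{E}}}(\forall\varepsilon.u\sim_\varepsilon v)\to u=v$, and the four closeness laws of a Cauchy structure hold on ${\mathbf{R}_\mathbf{E}}$.
   Context: Work in univalent type theory with propositional truncation, function extensionality and propositional resizing; $\Omega$ is the type of propositions, $\exists$ and $\vee$ are truncated; a subtype of $A$ is a map $A\to\Omega$, identified with $\sum_{a:A}P(a)$ and its first projection into $A$. $\mathbf{Q}$ is the rationals, $\mathbf{Q}_+$ the positive rationals. Premetric spaces and Cauchy structures: a premetric on $R$ is $\sim:\mathbf{Q}_+\times R\times R\to\Omega$; a Cauchy approximation is $x:\mathbf{Q}_+\to R$ with $\forall\delta,\varepsilon.\,x_\delta\sim_{\delta+\varepsilon}x_\varepsilon$, forming $\mathcal{C}_R$; $u$ is a limit of $x$ if $\forall\varepsilon,\theta.\,x_\varepsilon\sim_{\varepsilon+\theta}u$; $R$ is Cauchy complete if all Cauchy approximations have limits. A Cauchy structure is a premetric space $R$ with $\mathsf{rat}:\mathbf{Q}\to R$, $\lim:\mathcal{C}_R\to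 R$, $\mathsf{eq}:\prod_{u,v}(\forall\varepsilon.u\sim_\varepsilon v)\to u=v$, and the laws: $-\varepsilon<q-r<\varepsilon$ implies $\mathsf{rat}(q)\sim_\varepsilon\mathsf{rat}(r)$; $\mathsf{rat}(q)\sim_\varepsilon y_\delta$ implies $\mathsf{rat}(q)\sim_{\varepsilon+\delta}\lim(y)$; $x_\delta\sim_\varepsilon\mathsf{rat}(r)$ implies $\lim(x)\sim_{\varepsilon+\delta}\mathsf{rat}(r)$; $x_\delta\sim_\varepsilon y_\eta$ implies $\lim(x)\sim_{\varepsilon+\delta+\eta}\lim(y)$. Dedekind reals: for $L,U:\mathbf{Q}\to\Omega$ and $x=(L,U)$, $q<x$ means $L(q)$, $x<r$ means $U(r)$; $x$ is a Dedekind cut if inhabited ($\exists q.\,q<x$, $\exists r.\,x<r$), rounded ($q<x\Leftrightarrow\exists q'>q.\,q'<x$; $x<r\Leftrightarrow\exists r'<r.\,x<r'$), transitive ($q<x\wedge x<r\Rightarrow q<r$) and located ($q<r\Rightarrow q<x\vee x<r$); ${\mathbf{R}_\mathbf{D}}$ is their type. $\mathsf{rat}(q)$: $r<\mathsf{rat}(q)\Leftrightarrow r<q$, $\mathsf{rat}(q)<r\Leftrightarrow q<r$. $q<x+y:=\exists s,t.(q=s+t)\wedge(s<x)\wedge(t<y)$, $x+y<r:=\exists s,t.(r=s+t)\wedge(x<s)\wedge(y<t)$; $q<-x:=x<-q$, $-x<r:=-r<x$; $q<|x|:=(q<x)\vee(q<-x)$, $|x|<r:=(x<r)\wedge(-x<r)$;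 $x\sim_\varepsilon y:=|x+(-y)|<\varepsilon$. For $x:\mathcal{C}_{{\mathbf{R}_\mathbf{D}}}$: $q<\lim(x):=\exists(\varepsilon,\theta:\mathbf{Q}_+).\,q+\varepsilon+\theta<x_\varepsilon$ and $\lim(x)<r:=\exists(\varepsilon,\theta:\mathbf{Q}_+).\,x_\varepsilon<r-\varepsilon-\theta$. With these, ${\mathbf{R}_\mathbf{D}}$ is a Cauchy structure. Euclidean reals: a subtype $S$ of ${\mathbf{R}_\mathbf{D}}$ carries the restricted premetric. ${\mathbf{R}_\mathbf{E}}$ is the smallest subtype of ${\mathbf{R}_\mathbf{D}}$ containing all $\mathsf{rat}(q)$ and Cauchy complete for the restricted premetric; concretely $u\in{\mathbf{R}_\mathbf{E}}$ iff $u\in S$ for every such subtype $S$. *)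

(* Defs.v *)
(* rationals are MathComp's [rat]; Omega is modelled by Prop. *)
From HB Require Import structures.
From mathcomp Require Import all_boot all_order all_algebra.
From mathcomp Require Import lra.
Set Implicit Arguments. Unset Strict Implicit. Unset Printing Implicit Defensive.
Import Order.TTheory GRing.Theory Num.Theory.
Local Open Scope ring_scope.

Definition Qpos := {e : rat | 0 < e}.
Definition qpadd (d e : Qpos) : Qpos :=
  exist _ (sval d + sval e) (addr_gt0 (proj2_sig d) (proj2_sig e)).

Definition premetric (T : Type) := Qpos -> T -> T -> Prop.

Definition isCauchyApprox (T : Type) (prem : premetric T) (x : Qpos -> T) : Prop :=
  forall d e : Qpos, prem (qpadd d e) (x d) (x e).

Definition isLimit (T : Type) (prem : premetric T) (x : Qpos -> T) (u : T) : Prop :=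
  forall e th : Qpos, prem (qpadd e th) (x e) u.

Definition CauchyComplete (T : Type) (prem : premetric T) : Prop :=
  forall x : Qpos -> T, isCauchyApprox prem x -> exists u : T, isLimit prem x u.

Record CauchyStructure (T : Type) (prem : premetric T) := {
  cs_rat : rat -> T;
  cs_lim : forall x : Qpos -> T, isCauchyApprox prem x -> T;
  cs_eq : forall u v : T, (forall e : Qpos, prem e u v) -> u = v;
  cs_rat_rat : forall (q r : rat) (e : Qpos),
      - sval e < q - r -> q - r < sval e -> prem e (cs_rat q) (cs_rat r);
  cs_rat_lim : forall (q : rat) (y : Qpos -> T) (hy : isCauchyApprox prem y)
      (e d : Qpos), prem e (cs_rat q) (y d) -> prem (qpadd e d) (cs_rat q) (cs_lim hy);
  cs_lim_rat : forall (x : Qpos -> T) (hx : isCauchyApprox prem x) (r : rat)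
      (e d : Qpos), prem e (x d) (cs_rat r) -> prem (qpadd e d) (cs_lim hx) (cs_rat r);
  cs_lim_lim : forall (x y : Qpos -> T) (hx : isCauchyApprox prem x)
      (hy : isCauchyApprox prem y) (e d n : Qpos),
      prem e (x d) (y n) -> prem (qpadd (qpadd e d) n) (cs_lim hx) (cs_lim hy) }.

Definition Pair := ((rat -> Prop) * (rat -> Prop))%type.

Record isCut (x : Pair) : Prop := {
  cut_inhL : exists q, x.1 q;
  cut_inhU : exists r, x.2 r;
  cut_roundL : forall q, x.1 q <-> exists q', q < q' /\ x.1 q';
  cut_roundU : forall r, x.2 r <-> exists r', r' < r /\ x.2 r';
  cut_trans : forall q r, x.1 q -> x.2 r -> q < r;
  cut_loc : forall q r, q < r -> x.1 q \/ x.2 r }.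

Definition RD := {x : Pair | isCut x}.

Definition prat (q : rat) : Pair := (fun r => is_true (r < q), fun r => is_true (q < r)).
Definition padd (x y : Pair) : Pair :=
  (fun q => exists s t, q = s + t /\ x.1 s /\ y.1 t,
   fun r => exists s t, r = s + t /\ x.2 s /\ y.2 t).
Definition popp (x : Pair) : Pair := (fun q => x.2 (- q), fun r => x.1 (- r)).
Definition pabs (x : Pair) : Pair :=
  (fun q => x.1 q \/ (popp x).1 q, fun r => x.2 r /\ (popp x).2 r).
Definition pclose (e : Qpos) (x y : Pair) : Prop :=
  (pabs (padd x (popp y))).2 (sval e).
Definition plim (x : Qpos -> Pair) : Pair :=
  (fun q => exists e th : Qpos, (x e).1 (q + sval e + sval th),
   fun r => exists e th : Qpos, (x e).2 (r - sval e - sval th)).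

Lemma prat_isCut (q : rat) : isCut (prat q).
Proof.
split => /=.
- by exists (q - 1); lra.
- by exists (q + 1); lra.
- move=> r; split; last by case=> q' [] ? ?; lra.
  by move=> ?; exists ((r + q) / 2); split; lra.
- move=> r; split; last by case=> q' [] ? ?; lra.
  by move=> ?; exists ((r + q) / 2); split; lra.
- by move=> a b ? ?; lra.
- move=> a b ab; case: (ltP a q) => ?; [by left | right; lra].
Qed.

Definition ratD (q : rat) : RD := exist _ (prat q) (prat_isCut q).

Definition closeRD : premetric RD := fun e u v => pclose e (sval u) (sval v).

Definition subRD (S : RD -> Prop) := {u : RD | S u}.
Definition closeSub (S : RD -> Prop) : premetric (subRD S) :=
  fun e a b => closeRD e (sval a) (sval b).

Definition inRE (u : RD) : Prop :=
  forall S : RD -> Prop, (forall q, S (ratD q)) -> CauchyComplete (@closeSub S) -> S u.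
Definition RE := subRD inRE.
Definition closeRE : premetric RE := @closeSub inRE.

(* Main.v *)
Require Import Defs.
From HB Require Import structures.
From mathcomp Require Import all_boot all_order all_algebra.
From mathcomp Require Import lra.
From Stdlib Require Import ProofIrrelevance FunctionalExtensionality PropExtensionality.
Set Implicit Arguments. Unset Strict Implicit. Unset Printing Implicit Defensive.
Import Order.TTheory GRing.Theory Num.Theory.
Local Open Scope ring_scope.

Lemma cutL_down (x : Pair) q q' : isCut x -> x.1 q -> q' <= q -> x.1 q'.
Proof.
move=> cx Lq; rewrite le_eqVlt => /orP [/eqP -> // | lt].
by apply/(cut_roundL cx); exists q.
Qed.

Lemma cutU_up (x : Pair) r r' : isCut x -> x.2 r -> r <= r' -> x.2 r'.
Proof.
move=> cx Ur; rewrite le_eqVlt => /orP [/eqP <- // | lt].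
by apply/(cut_roundU cx); exists r.
Qed.

Lemma cut_tight (x : Pair) t : isCut x -> 0 < t ->
  exists a b, x.2 a /\ x.1 b /\ a - b <= t.
Proof.
move=> cx t0; case: (cut_inhL cx) => b0 Lb0; case: (cut_inhU cx) => a0 Ua0.
have H : forall n : nat, (exists a b, x.2 a /\ x.1 b /\ a - b <= t) \/
   x.1 (b0 + n%:R * (t/2)).
  elim => [|n [h|Ln]]; first by right; rewrite mul0r addr0.
  - by left.
  - case: (cut_loc cx (q := b0 + n%:R * (t / 2) + t/2) (r := b0 + n%:R * (t / 2) + t)) => [|L|U].
    + lra.
    + by right; rewrite mulrSr mulrDl mul1r addrA.
    + by left; exists (b0 + n%:R * (t / 2) + t), (b0 + n%:R * (t / 2)); split => //; split => //; lra.
pose y := `|(a0 - b0) / t|.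
have y0 : 0 <= y by rewrite normr_ge0.
have := archi_boundP y0 => hb.
case: (H (2 * Num.bound y)%N) => // Ln.
have := cut_trans cx Ln Ua0.
have e1 : (a0 - b0) / t <= y by rewrite ler_norm.
have e2 : (a0 - b0) / t * t = a0 - b0 by rewrite mulfVK // gt_eqF.
rewrite natrM.
move: hb e1 e2; set k := (Num.bound y)%:R; set z := (a0 - b0) / t => hb e1 e2 h.
exfalso. have : k * t <= (a0 - b0) by lra.
nra.
Qed.
Definition Ab (e : rat) (u v : Pair) := exists a b, u.2 a /\ v.1 b /\ a - b <= e.

Lemma close_iff (e : Qpos) u v : isCut u -> isCut v ->
  pclose e u v <-> Ab (sval e) u v /\ Ab (sval e) v u.
Proof.
move=> cu cv; rewrite /pclose /pabs /padd /popp /=; split.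
- case=> [[s [t [-> [Us Lt]]]] [s' [t' [E [Ls' Ut']]]]]; split.
  + by exists s, (-t); split => //; split => //; lra.
  + by exists (-t'), s'; split => //; split => //; lra.
- case=> [[a [b [Ua [Lb ab]]]] [a' [b' [Ua' [Lb' ab']]]]]; split.
  + exists (sval e + b), (-b); split; first lra.
    split; last by rewrite opprK.
    by apply: (cutU_up cu Ua); lra.
  + exists (b'), (- sval e - b'); split; first lra.
    split => //; have -> : - (- sval e - b') = sval e + b' by lra.
    by apply: (cutU_up cv Ua'); lra.
Qed.

Lemma Ab_mono e d1 d2 u v u' v' :
  (forall a, u.2 a -> u'.2 (a + d1)) -> (forall b, v.1 b -> v'.1 (b - d2)) ->
  Ab e u v -> forall e', e + d1 + d2 <= e' -> Ab e' u' v'.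
Proof.
move=> hu hv [a [b [Ua [Lb ab]]]] e' le.
exists (a + d1), (b - d2); split; first exact: hu.
split; first exact: hv. lra.
Qed.

Definition mkQpos (t : rat) (h : 0 < t) : Qpos := exist _ t h.

Lemma limU (x : Qpos -> Pair) d a : isCut (x d) -> (x d).2 a -> (plim x).2 (a + sval d).
Proof.
move=> cx Ua; case/(cut_roundU cx): Ua => a' [lt Ua'].
have h : 0 < a - a' by lra.
exists d, (mkQpos h) => /=; apply: (cutU_up cx Ua'); lra.
Qed.

Lemma limL (x : Qpos -> Pair) d b : isCut (x d) -> (x d).1 b -> (plim x).1 (b - sval d).
Proof.
move=> cx Lb; case/(cut_roundL cx): Lb => b' [lt Lb'].
have h : 0 < b' - b by lra.
exists d, (mkQpos h) => /=; apply: (cutL_down cx Lb'); lra.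
Qed.

Lemma plim_cut (x : Qpos -> Pair) : (forall e, isCut (x e)) ->
  (forall d e, pclose (qpadd d e) (x d) (x e)) -> isCut (plim x).
Proof.
move=> cx cauchy.
pose one := mkQpos (ltr01 : (0 : rat) < 1).
split.
- case: (cut_inhL (cx one)) => b Lb; exists (b - 2), one, one => /=.
  apply: (cutL_down (cx one) Lb); lra.
- case: (cut_inhU (cx one)) => b Lb; exists (b + 2), one, one => /=.
  apply: (cutU_up (cx one) Lb); lra.
- move=> q; split.
  + case=> e [th L]. have h : 0 < sval th / 2 by case: th L => /= t t0 _; lra.
    exists (q + sval th / 2); split; first lra.
    exists e, (mkQpos h) => /=. apply: (cutL_down (cx e) L); lra.
  + case=> q' [lt [e [th L]]].
    have h : 0 < sval th + (q' - q) by case: th L => /= t t0 _; lra.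
    exists e, (mkQpos h) => /=. apply: (cutL_down (cx e) L); lra.
- move=> q; split.
  + case=> e [th L]. have h : 0 < sval th / 2 by case: th L => /= t t0 _; lra.
    exists (q - sval th / 2); split; first lra.
    exists e, (mkQpos h) => /=. apply: (cutU_up (cx e) L); lra.
  + case=> q' [lt [e [th L]]].
    have h : 0 < sval th + (q - q') by case: th L => /= t t0 _; lra.
    exists e, (mkQpos h) => /=. apply: (cutU_up (cx e) L); lra.
- move=> q r [e [th Lq]] [n [z Ur]].
  have [[a [b [Ua [Lb ab]]]] _] := (close_iff _ (cx e) (cx n)).1 (cauchy e n).
  have h1 := cut_trans (cx e) Lq Ua.
  have h2 := cut_trans (cx n) Lb Ur.
  move: ab h1 h2 => /=.
  case: e {Lq Ua} => e e0; case: n {Ur Lb} => n n0; case: th => t t0; case: z => z z0 /=.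
  lra.
- move=> q r lt.
  have h : 0 < (r - q) / 5 by lra.
  case: (cut_loc (cx (mkQpos h)) (q := q + (r - q) / 5 + (r - q) / 5) (r := r - (r - q) / 5 - (r - q) / 5)).
  + lra.
  + by move=> L; left; exists (mkQpos h), (mkQpos h).
  + by move=> U; right; exists (mkQpos h), (mkQpos h).
Qed.
Lemma pair_ext (u v : Pair) : (forall q, u.1 q <-> v.1 q) -> (forall q, u.2 q <-> v.2 q) -> u = v.
Proof.
case: u => u1 u2; case: v => v1 v2 /= h1 h2.
have -> : u1 = v1 by apply: functional_extensionality => q; apply: propositional_extensionality.
have -> : u2 = v2 by apply: functional_extensionality => q; apply: propositional_extensionality.
by [].
Qed.

Lemma RD_ext (u v : RD) : sval u = sval v -> u = v.
Proof.
case: u => u pu; case: v => v pv /= e; subst v; by rewrite (proof_irrelevance _ pu pv).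
Qed.

Lemma eq_L (u v : Pair) : isCut u -> isCut v ->
  (forall e : Qpos, Ab (sval e) u v) -> forall q, u.1 q -> v.1 q.
Proof.
move=> cu cv H q Lq; case/(cut_roundL cu): Lq => q' [lt Lq'].
have h : 0 < (q' - q) / 2 by lra.
case: (cut_loc cv (q := q) (r := (q + q') / 2)) => //; first lra.
move=> U; case: (H (mkQpos h)) => a [b [Ua [Lb ab]]].
have := cut_trans cu Lq' Ua; have := cut_trans cv Lb U; move: ab => /=; lra.
Qed.

Lemma eq_U (u v : Pair) : isCut u -> isCut v ->
  (forall e : Qpos, Ab (sval e) v u) -> forall q, u.2 q -> v.2 q.
Proof.
move=> cu cv H r Ur; case/(cut_roundU cu): Ur => r' [lt Ur'].
have h : 0 < (r - r') / 2 by lra.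
case: (cut_loc cv (q := (r + r') / 2) (r := r)) => //; first lra.
move=> L; case: (H (mkQpos h)) => a [b [Ua [Lb ab]]].
have := cut_trans cv L Ua; have := cut_trans cu Lb Ur'; move: ab => /=; lra.
Qed.

Lemma RD_eq (u v : RD) : (forall e, closeRD e u v) -> u = v.
Proof.
case: u => u cu; case: v => v cv /= H; apply: RD_ext => /=.
have H1 (e : Qpos) : Ab (sval e) u v by case: ((close_iff e cu cv).1 (H e)).
have H2 (e : Qpos) : Ab (sval e) v u by case: ((close_iff e cu cv).1 (H e)).
apply: pair_ext => q; split.
- exact: eq_L.
- apply: eq_L => //.
- apply: eq_U => //.
- exact: eq_U.
Qed.

Lemma limit_unique (x : Qpos -> RD) (u : RD) : isLimit closeRD x u ->
  sval u = plim (fun e => sval (x e)).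
Proof.
case: u => u cu /= H.
have cx e : isCut (sval (x e)) by case: (x e).
have H1 (e th : Qpos) : Ab (sval e + sval th) (sval (x e)) u
  by case: ((close_iff (qpadd e th) (cx e) cu).1 (H e th)).
have H2 (e th : Qpos) : Ab (sval e + sval th) u (sval (x e))
  by case: ((close_iff (qpadd e th) (cx e) cu).1 (H e th)).
apply: pair_ext => q; split.
- case/(cut_roundL cu) => q' [lt Lq'].
  have h : 0 < (q' - q) / 4 by lra.
  case: (H2 (mkQpos h) (mkQpos h)) => a [b [Ua [Lb ab]]].
  exists (mkQpos h), (mkQpos h) => /=.
  apply: (cutL_down (cx _) Lb). have := cut_trans cu Lq' Ua. move: ab => /=. lra.
- case=> e [th L].
  case: (H1 e th) => a [b [Ua [Lb ab]]].
  apply: (cutL_down cu Lb). have := cut_trans (cx e) L Ua. move: ab. lra.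
- case/(cut_roundU cu) => q' [lt Uq'].
  have h : 0 < (q - q') / 4 by lra.
  case: (H1 (mkQpos h) (mkQpos h)) => a [b [Ua [Lb ab]]].
  exists (mkQpos h), (mkQpos h) => /=.
  apply: (cutU_up (cx _) Ua). have := cut_trans cu Lb Uq'. move: ab => /=. lra.
- case=> e [th U].
  case: (H2 e th) => a [b [Ua [Lb ab]]].
  apply: (cutU_up cu Ua). have := cut_trans (cx e) Lb U. move: ab. lra.
Qed.

Lemma close_shift (e e' : Qpos) (u v u' v' : Pair) d1 d2 :
  isCut u -> isCut v -> isCut u' -> isCut v' ->
  (forall a, u.2 a -> u'.2 (a + d1)) -> (forall b, u.1 b -> u'.1 (b - d1)) ->
  (forall a, v.2 a -> v'.2 (a + d2)) -> (forall b, v.1 b -> v'.1 (b - d2)) ->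
  sval e + d1 + d2 <= sval e' -> pclose e u v -> pclose e' u' v'.
Proof.
move=> cu cv cu' cv' hu1 hu2 hv1 hv2 le /(close_iff e cu cv) [A1 A2].
apply/(close_iff e' cu' cv'); split.
- exact: (Ab_mono hu1 hv2 A1).
- apply: (Ab_mono hv1 hu2 A2); lra.
Qed.

Lemma rat_U q a : (prat q).2 a -> (prat q).2 (a + 0). Proof. by rewrite addr0. Qed.
Lemma rat_L q a : (prat q).1 a -> (prat q).1 (a - 0). Proof. by rewrite subr0. Qed.

Section Build.

Definition xsv (x : Qpos -> RE) : Qpos -> Pair := fun e => sval (sval (x e)).

Lemma xsv_cut (x : Qpos -> RE) e : isCut (xsv x e).
Proof. by rewrite /xsv; case: (sval (x e)). Qed.

Definition plimRD (x : Qpos -> RE) (hx : isCauchyApprox closeRE x) : RD :=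
  exist _ (plim (xsv x)) (plim_cut (xsv_cut x) hx).

Lemma plimRD_inRE (x : Qpos -> RE) (hx : isCauchyApprox closeRE x) : inRE (plimRD hx).
Proof.
move=> S HS HC.
pose y : Qpos -> subRD S := fun e => exist _ (sval (x e)) (svalP (x e) S HS HC).
have hy : isCauchyApprox (@closeSub S) y by exact: hx.
case: (HC y hy) => u hu.
have E := limit_unique (x := fun e => sval (x e)) hu.
have -> : plimRD hx = sval u by apply: RD_ext; rewrite E.
exact: svalP u.
Qed.

Definition limRE (x : Qpos -> RE) (hx : isCauchyApprox closeRE x) : RE :=
  exist _ (plimRD hx) (plimRD_inRE hx).

Definition ratRE (q : rat) : RE := exist inRE (ratD q) (fun S HS _ => HS q).

Lemma RE_eq (u v : RE) : (forall e, closeRE e u v) -> u = v.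
Proof.
move=> H; have E : sval u = sval v by apply: RD_eq.
case: u v E {H} => u pu [v pv] /= E; subst v; by rewrite (proof_irrelevance _ pu pv).
Qed.

End Build.

Theorem proposition2p28 :
  exists CS : CauchyStructure closeRE,
    (forall q : rat, sval (cs_rat CS q) = ratD q) /\
    (forall (x : Qpos -> RE) (hx : isCauchyApprox closeRE x),
        sval (sval (cs_lim CS hx)) = plim (fun e => sval (sval (x e)))).
Proof.
unshelve eexists (@Build_CauchyStructure RE closeRE ratRE limRE RE_eq _ _ _ _); last by split.
- move=> q r e h1 h2.
  apply/(close_iff e (prat_isCut q) (prat_isCut r)); split.
  + exists (q + (sval e - (q - r)) / 2), (r - (sval e - (q - r)) / 2) => /=.
    split; first lra. split; lra.
  + exists (r + (sval e + (q - r)) / 2), (q - (sval e + (q - r)) / 2) => /=.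
    split; first lra. split; lra.
- move=> q y hy e d H.
  apply: (close_shift (d1 := 0) (d2 := sval d) _ _ _ _ (@rat_U q) (@rat_L q) _ _ _ H).
  + exact: prat_isCut.
  + exact: xsv_cut.
  + exact: prat_isCut.
  + exact: (plim_cut (xsv_cut y) hy).
  + by move=> a; apply: limU; apply: xsv_cut.
  + by move=> a; apply: limL; apply: xsv_cut.
  + by rewrite /=; lra.
- move=> x hx r e d H.
  apply: (close_shift (d1 := sval d) (d2 := 0) _ _ _ _ _ _ (@rat_U r) (@rat_L r) _ H).
  + exact: xsv_cut.
  + exact: prat_isCut.
  + exact: (plim_cut (xsv_cut x) hx).
  + exact: prat_isCut.
  + by move=> a; apply: limU; apply: xsv_cut.
  + by move=> a; apply: limL; apply: xsv_cut.
  + by rewrite /=; lra.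
- move=> x y hx hy e d n H.
  apply: (close_shift (d1 := sval d) (d2 := sval n) _ _ _ _ _ _ _ _ _ H).
  + exact: xsv_cut.
  + exact: xsv_cut.
  + exact: (plim_cut (xsv_cut x) hx).
  + exact: (plim_cut (xsv_cut y) hy).
  + by move=> a; apply: limU; apply: xsv_cut.
  + by move=> a; apply: limL; apply: xsv_cut.
  + by move=> a; apply: limU; apply: xsv_cut.
  + by move=> a; apply: limL; apply: xsv_cut.
  + by rewrite /=; lra.
Qed.
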